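(* Let $M \subseteq \mathrm{Inj}(\Omega)$ be a normal submonoid. Then either $M \cap \mathrm{Inj}_{\infty}(\Omega) = \emptyset$ or $\mathrm{Inj}_{\infty}(\Omega) \subseteq M$.
   Context: $\Omega$ is a countably infinite set; maps are written on the right and composed left to right. $\mathrm{Inj}(\Omega)$ is the monoid of all injective maps $\Omega\to\Omega$, $\mathrm{Sym}(\Omega)$ the group of permutations of $\Omega$. $\mathrm{Inj}_\infty(\Omega)=\{f\in\mathrm{Inj}(\Omega): |\Omega\setminus(\Omega)f|=\aleph_0\}$. A subset of $\mathrm{Inj}(\Omega)$ is normal if it is closed under $f\mapsto afa^{-1}$ for all $a\in\mathrm{Sym}(\Omega)$. *)

(* Defs.v *)
From mathcomp Require Import ssreflect ssrfun ssrbool.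
Set Implicit Arguments. Unset Strict Implicit.

Definition countably_infinite (Omega : Type) : Prop :=
  exists e : Omega -> nat, bijective e.

Definition Inj (Omega : Type) (f : Omega -> Omega) : Prop := injective f.

Definition Sym (Omega : Type) (a : Omega -> Omega) : Prop := bijective a.

Definition not_in_image (Omega : Type) (f : Omega -> Omega) (y : Omega) : Prop :=
  forall x, f x <> y.

(* Inj_infty(Omega): injective f with |Omega \ (Omega)f| = aleph_0, i.e. the
   complement of the image is in bijection with nat. *)
Definition Inj_infty (Omega : Type) (f : Omega -> Omega) : Prop :=
  injective f /\
  exists g : nat -> Omega,
    injective g /\ (forall n, not_in_image f (g n)) /\
    (forall y, not_in_image f y -> exists n, g n = y).

(* Maps are written on the right and composed left to right, so
   x(f g) = (x f) g, i.e. (f g) is [fun x => g (f x)], and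
   x (a f a^{-1}) = a^{-1} (f (a x)). *)
Definition rcomp (Omega : Type) (f g : Omega -> Omega) : Omega -> Omega :=
  fun x => g (f x).

Definition submonoid_Inj (Omega : Type) (M : (Omega -> Omega) -> Prop) : Prop :=
  (forall f, M f -> Inj f) /\ M id /\
  (forall f g, M f -> M g -> M (rcomp f g)).

(* M is normal: closed under f |-> a f a^{-1} for all a in Sym(Omega);
   a^{-1} is given as the two-sided inverse b of a. *)
Definition normal_Inj (Omega : Type) (M : (Omega -> Omega) -> Prop) : Prop :=
  forall (a b : Omega -> Omega) (f : Omega -> Omega),
    cancel a b -> cancel b a -> M f -> M (rcomp (rcomp a f) b).

(* Main.v *)
Require Import Defs.
From mathcomp Require Import ssreflect ssrfun ssrbool eqtype ssrnat fintype.
From Stdlib Require Import Classical ClassicalEpsilon FunctionalExtensionality Lia Cantor PeanoNat.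
Set Implicit Arguments. Unset Strict Implicit.

Definition cif (P : Prop) {A : Type} (a b : A) : A :=
  match excluded_middle_informative P with left _ => a | right _ => b end.

Lemma cifT (P : Prop) A (a b : A) : P -> cif P a b = a.
Proof. rewrite /cif => H; case: excluded_middle_informative => //. Qed.
Lemma cifF (P : Prop) A (a b : A) : ~ P -> cif P a b = b.
Proof. rewrite /cif => H; case: excluded_middle_informative => //. Qed.

Lemma choice_fun (A B : Type) (P : A -> B -> Prop) :
  (forall x, exists y, P x y) -> exists f : A -> B, forall x, P x (f x).
Proof.
move=> H; exists (fun x => proj1_sig (constructive_indefinite_description _ (H x))).
move=> x; exact: proj2_sig (constructive_indefinite_description _ (H x)).
Qed.



Lemma pigeon (h : nat -> nat) : injective h -> forall N, exists x, Peano.le N (h x).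
Proof.
move=> hi N; apply: NNPP => Hn.
have H : forall x, (h x < N)%N.
  move=> x; apply/ltP; apply: NNPP => Hle; apply: Hn; exists x; lia.
pose F := fun i : 'I_N.+1 => Ordinal (H i).
have Fi : injective F.
  move=> i j /(congr1 val) /= /hi Hij; exact: val_inj.
by have := leq_card F Fi; rewrite !card_ord ltnn.
Qed.

Lemma enum_nat (T : nat -> Prop) :
  (forall N, exists m, Peano.le N m /\ T m) ->
  exists c : nat -> nat, (forall n, T (c n)) /\ injective c /\
    (forall m, T m -> exists n, c n = m).
Proof.
move=> Hinf.
have Hleast : forall N, exists m, (Peano.le N m /\ T m) /\
    forall m', Peano.le N m' /\ T m' -> Peano.le m m'.
  move=> N; have [m Hm] := Hinf N.
  have := Wf_nat.dec_inh_nat_subset_has_unique_least_element (fun m => Peano.le N m /\ T m)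
    (fun n => classic _) (ex_intro _ m Hm).
  by case=> x [[Hx1 Hx2] _]; exists x.
have [nx Hnx] := choice_fun Hleast.
pose c := fix c n := match n with 0 => nx 0 | S k => nx (S (c k)) end.
have cT : forall n, T (c n).
  case=> [|n] /=.
    by case: (Hnx 0) => [[_ H] _].
  by case: (Hnx (S (c n))) => [[_ H] _].
have cinc : forall n, Peano.lt (c n) (c (S n)).
  move=> n /=; case: (Hnx (S (c n))) => [[H1 _] _]; lia.
have cge : forall n, Peano.le n (c n).
  elim=> [|n IH]; first lia. have := cinc n; lia.
have cmono : forall n m, Peano.lt n m -> Peano.lt (c n) (c m).
  move=> n m; elim: m => [|m IH]; first lia.
  move=> H; have := cinc m; case: (Nat.eq_dec n m) => [->|Hne]; first lia.
  have := IH ltac:(lia); lia.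
exists c; split=> //; split.
  move=> n m Hnm; case: (Nat.lt_total n m) => [H|[H|H]] //.
    have := cmono _ _ H; lia.
  have := cmono _ _ H; lia.
move=> m Tm; apply: NNPP => Hn.
have key : forall n, Peano.lt (c n) m.
  elim=> [|n IH].
    have Hle : Peano.le (c 0) m by case: (Hnx 0) => _ Hl; apply: Hl; split=> //; lia.
    have : c 0 <> m by move=> E; apply: Hn; exists 0.
    lia.
  have Hle : Peano.le (c (S n)) m.
    by rewrite /=; case: (Hnx (S (c n))) => _ Hl; apply: Hl; split=> //; lia.
  have : c (S n) <> m by move=> E; apply: Hn; exists (S n).
  lia.
have := key m; have := cge m; lia.
Qed.

Lemma enum_Omega (Omega : Type) (e : Omega -> nat) (e' : nat -> Omega) :
  cancel e e' -> cancel e' e ->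
  forall (S : Omega -> Prop) (k : nat -> Omega), injective k -> (forall n, S (k n)) ->
  exists c : nat -> Omega, injective c /\ (forall n, S (c n)) /\
    (forall y, S y -> exists n, c n = y).
Proof.
move=> ee' e'e S k ki kS.
have hinj : injective (fun n => e (k n)).
  by move=> n m /(can_inj ee') /ki.
have Hinf : forall N, exists m, Peano.le N m /\ S (e' m).
  move=> N; have [x Hx] := pigeon hinj N; exists (e (k x)); split=> //.
  by rewrite ee'.
have [c [cT [ci cs]]] := enum_nat Hinf.
exists (fun n => e' (c n)); split; [|split].
- by move=> n m /(can_inj e'e) /ci.
- by [].
- move=> y Sy; have [n Hn] := cs (e y) ltac:(by rewrite ee').
  by exists n; rewrite Hn ee'.
Qed.

Lemma inj_iter (Omega : Type) (u : Omega -> Omega) (c : nat -> Omega) :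
  injective u -> injective c -> (forall n x, u x <> c n) ->
  forall n m i j, Nat.iter n u (c i) = Nat.iter m u (c j) -> i = j /\ n = m.
Proof.
move=> ui ci cu; elim=> [|n IH] [|m] i j /=.
- by move=> /ci.
- by move=> E; exfalso; apply: (cu i _ (esym E)).
- by move=> E; exfalso; apply: (cu j _ E).
- by move=> /ui /IH [-> ->].
Qed.

Definition sN (m : nat) : nat :=
  let '(i, n) := Cantor.of_nat m in Cantor.to_nat (i, S n).

Lemma shift_conj (Omega : Type) (u : Omega -> Omega) (r : Omega -> nat)
  (c : nat -> Omega) :
  injective u -> (forall x, Peano.lt (r x) (r (u x))) -> injective c ->
  (forall n x, u x <> c n) -> (forall y, (forall x, u x <> y) -> exists n, c n = y) ->
  exists (P : nat -> Omega) (Pi : Omega -> nat),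
    cancel P Pi /\ cancel Pi P /\ forall m, u (P m) = P (sN m).
Proof.
move=> ui ur ci cu cs.
pose P m := let '(i, n) := Cantor.of_nat m in Nat.iter n u (c i).
have surj : forall y, exists m, P m = y.
  suff H : forall K y, Peano.lt (r y) K -> exists i n, Nat.iter n u (c i) = y.
    move=> y; have [i [n E]] := H (S (r y)) y ltac:(lia).
    by exists (Cantor.to_nat (i, n)); rewrite /P Cantor.cancel_of_to.
  elim=> [|K IH] y Hy; first lia.
  case: (classic (exists x, u x = y)) => [[x Hx]|Hn].
    have := ur x; rewrite Hx => Hxy.
    have [i [n E]] := IH x ltac:(lia).
    by exists i, (S n); rewrite /= E.
  have [n Hn'] := cs y (fun x E => Hn (ex_intro _ x E)).
  by exists n, 0.
have Pinj : injective P.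
  move=> m1 m2; rewrite /P -{2}(Cantor.cancel_to_of m1) -{2}(Cantor.cancel_to_of m2).
  case: (Cantor.of_nat m1) => i n; case: (Cantor.of_nat m2) => j m.
  by move=> /(inj_iter ui ci cu) [-> ->].
have [Pi HPi] := choice_fun surj.
exists P, Pi; split; [|split].
- by move=> m; apply: Pinj; rewrite HPi.
- by [].
- move=> m; rewrite /P /sN; case: (Cantor.of_nat m) => i n.
  by rewrite Cantor.cancel_of_to.
Qed.

Definition pure (Omega : Type) (u : Omega -> Omega) : Prop :=
  injective u /\ (exists r : Omega -> nat, forall x, Peano.lt (r x) (r (u x))) /\
  exists k : nat -> Omega, injective k /\ forall n x, u x <> k n.

Lemma pure_conj (Omega : Type) (e : Omega -> nat) (e' : nat -> Omega) :
  cancel e e' -> cancel e' e -> forall u, pure u ->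
  exists (P : nat -> Omega) (Pi : Omega -> nat),
    cancel P Pi /\ cancel Pi P /\ forall m, u (P m) = P (sN m).
Proof.
move=> ee' e'e u [ui [[r ur] [k [ki ku]]]].
have [c [ci [cS cs]]] := enum_Omega ee' e'e (S := fun y => forall x, u x <> y) ki
   (fun n x => ku n x).
exact: (shift_conj ui ur ci cS cs).
Qed.

Lemma pure_M (Omega : Type) (e : Omega -> nat) (e' : nat -> Omega)
  (M : (Omega -> Omega) -> Prop) :
  cancel e e' -> cancel e' e -> normal_Inj M ->
  forall u1 u2, pure u1 -> pure u2 -> M u1 -> M u2.
Proof.
move=> ee' e'e HN u1 u2 p1 p2 Mu1.
have [P1 [Pi1 [c11 [c12 h1]]]] := pure_conj ee' e'e p1.
have [P2 [Pi2 [c21 [c22 h2]]]] := pure_conj ee' e'e p2.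
have := HN (fun x => P1 (Pi2 x)) (fun x => P2 (Pi1 x)) u1.
have E : rcomp (rcomp (fun x => P1 (Pi2 x)) u1) (fun x => P2 (Pi1 x)) = u2.
  apply: functional_extensionality => x; rewrite /rcomp h1 c11.
  by rewrite -h2 c22.
rewrite E; apply=> //.
- by move=> x; rewrite c11 c22.
- by move=> x; rewrite c21 c12.
Qed.

Lemma step2 (Omega : Type) (e : Omega -> nat) (e' : nat -> Omega)
  (M : (Omega -> Omega) -> Prop) :
  cancel e e' -> cancel e' e -> submonoid_Inj M -> normal_Inj M ->
  forall f, M f -> Inj_infty f -> exists u, pure u /\ M u.
Proof.
move=> ee' e'e [_ [_ Mcomp]] HN f Mf [fi [c [ci [cu cs]]]].
have cu' : forall n x, f x <> c n by move=> n x; exact: cu.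
pose D x := exists i n, x = Nat.iter n f (c i).
have [r Hr] : exists r : Omega -> nat, forall x,
    (forall i n, x = Nat.iter n f (c i) -> r x = n) /\ (~ D x -> r x = 0).
  suff H : forall x, exists y : nat,
    (forall i n, x = Nat.iter n f (c i) -> y = n) /\ (~ D x -> y = 0).
    exact: choice_fun H.
  move=> x; case: (classic (D x)) => [[i [n E]]|nD].
    exists n; split; last by move=> H; exfalso; apply: H; exists i, n.
    move=> j m E'; by have [_ ->] := inj_iter fi ci cu' (etrans (esym E) E').
  exists 0; split=> // i n E; exfalso; apply: nD; by exists i, n.
have [t Ht] : exists t : Omega -> Omega, forall x,
   (~ D x -> t x = c (e x)) /\ (forall k, ~ D k -> x = c (e k) -> t x = k) /\
   (D x -> (forall k, ~ D k -> x <> c (e k)) -> t x = x).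
  suff H : forall x, exists y,
   (~ D x -> y = c (e x)) /\ (forall k, ~ D k -> x = c (e k) -> y = k) /\
   (D x -> (forall k, ~ D k -> x <> c (e k)) -> y = x).
    exact: choice_fun H.
  move=> x; case: (classic (D x)) => Dx.
    case: (classic (exists k, ~ D k /\ x = c (e k))) => [[k [nk Ek]]|Hn].
      exists k; split; first by move=> /(_ Dx).
      split; last by move=> _ H; exfalso; exact: (H k nk Ek).
      move=> k' nk' Ek'; rewrite Ek in Ek'.
      by have /(can_inj ee') -> := ci _ _ Ek'.
    exists x; split; first by [].
    split; last by [].
    move=> k nk Ek; exfalso; apply: Hn; by exists k.
  exists (c (e x)); split=> //; split; last by move=> /Dx.
  move=> k nk Ek; exfalso; apply: Dx; exists (e k), 0; by rewrite Ek.
have Dc : forall i, D (c i) by move=> i; exists i, 0.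
have Df : forall y, D y -> D (f y) by move=> y [i [n E]]; exists i, (S n); rewrite E.
have nDf : forall y, ~ D y -> ~ D (f y).
  move=> y nD [i [[|n] E]]; first by exact: (cu' _ _ E).
  by apply: nD; exists i, n; apply: fi.
have tinv : forall x, t (t x) = x.
  move=> x; case: (classic (D x)) => Dx.
    case: (classic (exists k, ~ D k /\ x = c (e k))) => [[k [nk Ek]]|Hn].
      by rewrite (proj1 (proj2 (Ht x)) k nk Ek) (proj1 (Ht k) nk) Ek.
    have H := proj2 (proj2 (Ht x)) Dx (fun k nk Ek => Hn (ex_intro _ k (conj nk Ek))).
    by rewrite !H.
  by rewrite (proj1 (Ht x) Dx); exact: (proj1 (proj2 (Ht _)) x Dx erefl).
have key : forall y, Peano.lt (r (t y)) (r (f (t (f y)))).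
  move=> y; case: (classic (D y)) => Dy.
    have [i [n E]] := Dy.
    have tfy : t (f y) = f y.
      apply: (proj2 (proj2 (Ht _))); first exact: Df.
      move=> k _ Ek; exact: (cu' _ _ Ek).
    rewrite tfy.
    have -> : r (f (f y)) = S (S n) by apply: (proj1 (Hr _) i); rewrite E.
    suff : Peano.le (r (t y)) n by lia.
    case: (classic (exists k, ~ D k /\ y = c (e k))) => [[k [nk Ek]]|Hn].
      rewrite (proj1 (proj2 (Ht y)) k nk Ek) (proj2 (Hr k) nk); lia.
    rewrite (proj2 (proj2 (Ht y)) Dy (fun k nk Ek => Hn (ex_intro _ k (conj nk Ek)))).
    rewrite (proj1 (Hr y) i n E); lia.
  rewrite (proj1 (Ht y) Dy) (proj1 (Ht (f y)) (nDf y Dy)).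
  rewrite (proj1 (Hr (c (e y))) (e y) 0 erefl).
  rewrite (proj1 (Hr (f (c (e (f y))))) (e (f y)) 1 erefl); lia.
have tinj : injective t := can_inj tinv.
exists (fun x => f (t (f (t x)))); split.
  split; first by move=> x y /fi /tinj /fi /tinj.
  split; last by exists c; split=> // n x; exact: cu'.
  by exists r => x; have := key (t x); rewrite tinv.
exact: (Mcomp _ _ (HN t t f tinv tinv Mf) Mf).
Qed.

Ltac mlia := repeat (match goal with
 | H : context [muln] |- _ => rewrite -multE in H
 | H : context [addn] |- _ => rewrite -plusE in H
 | |- context [muln] => rewrite -multE
 | |- context [addn] => rewrite -plusE end); lia.

Lemma step3 (Omega : Type) (e : Omega -> nat) (e' : nat -> Omega) :
  cancel e e' -> cancel e' e ->
  forall g, Inj_infty g -> exists P Q : Omega -> Omega, pure P /\ pure Q /\ forall x, g x = P (Q x).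
Proof.
move=> ee' e'e g [gi [d [di [dg ds]]]].
have dg' : forall n x, g x <> d n by move=> n x; exact: dg.
pose Dd x := exists k, d k = x.
have [idx Hidx] : exists idx : Omega -> nat, forall x,
    (forall k, d k = x -> idx x = k) /\ (~ Dd x -> idx x = 0).
  suff H : forall x, exists y : nat,
      (forall k, d k = x -> y = k) /\ (~ Dd x -> y = 0).
    exact: choice_fun H.
  move=> x; case: (classic (Dd x)) => [[k Ek]|nD].
    exists k; split; last by move=> H; exfalso; apply: H; exists k.
    by move=> k' Ek'; apply: di; rewrite Ek Ek'.
  by exists 0; split=> // k Ek; exfalso; apply: nD; exists k.
have idxd : forall k, idx (d k) = k by move=> k; exact: (proj1 (Hidx _) k erefl).
pose j y := cif (Dd y) (4 * idx y + 4) (4 * e y + 2).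
have jform : forall y, exists m, j y = 2 * m + 2.
  move=> y; rewrite /j; case: (classic (Dd y)) => H.
    by rewrite cifT //; exists (2 * idx y + 1); mlia.
  by rewrite cifF //; exists (2 * e y); mlia.
have jgt : forall y, Peano.lt (idx y) (j y).
  move=> y; rewrite /j; case: (classic (Dd y)) => H.
    by rewrite cifT //; mlia.
  by rewrite cifF // (proj2 (Hidx y) H); mlia.
have jinj : injective j.
  move=> y1 y2; rewrite /j; case: (classic (Dd y1)) => H1; case: (classic (Dd y2)) => H2.
  - rewrite !cifT // => E.
    case: H1 => k1 E1; case: H2 => k2 E2; subst.
    rewrite !idxd in E; f_equal; mlia.
  - rewrite cifT // cifF //; mlia.
  - rewrite cifF // cifT //; mlia.
  - rewrite !cifF // => E; apply: (can_inj ee'); mlia.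
pose Q y := d (j y).
have Qinj : injective Q by move=> y1 y2 /di /jinj.
pose ImQ x := exists y, Q y = x.
have [Qi HQi] : exists Qi : Omega -> Omega, forall x, forall y, Q y = x -> Qi x = y.
  suff H : forall x, exists z, forall y, Q y = x -> z = y by exact: choice_fun H.
  move=> x; case: (classic (ImQ x)) => [[y Ey]|nQ].
    by exists y => y' Ey'; apply: Qinj; rewrite Ey Ey'.
  by exists x => y Ey; exfalso; apply: nQ; exists y.
have ImQ_Dd : forall x, ImQ x -> Dd x by move=> x [y <-]; exists (j y).
have d_notQ : forall m, (forall a, m <> 2 * a + 2) -> ~ ImQ (d m).
  move=> m Hm [y /di E]; have [a Ea] := jform y; apply: (Hm a); mlia.
have g_notD : forall z, ~ Dd (g z) by move=> z [k Ek]; exact: (dg' k z (esym Ek)).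
pose P x := cif (ImQ x) (g (Qi x)) (cif (Dd x) (d (4 * idx x + 3)) (d (4 * e x + 1))).
have Pcase : forall x, (ImQ x /\ P x = g (Qi x)) \/
    (~ ImQ x /\ Dd x /\ P x = d (4 * idx x + 3)) \/
    (~ ImQ x /\ ~ Dd x /\ P x = d (4 * e x + 1)).
  move=> x; rewrite /P; case: (classic (ImQ x)) => HQ.
    by left; rewrite cifT.
  right; rewrite cifF //; case: (classic (Dd x)) => HD.
    by left; rewrite cifT.
  by right; rewrite cifF.
exists P, Q; split; [|split].
- split.
    move=> x1 x2.
    case: (Pcase x1) => [[Q1 ->]|[[nQ1 [D1 ->]]|[nQ1 [nD1 ->]]]];
    case: (Pcase x2) => [[Q2 ->]|[[nQ2 [D2 ->]]|[nQ2 [nD2 ->]]]].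
    + case: Q1 => y1 E1; case: Q2 => y2 E2.
      rewrite (HQi _ _ E1) (HQi _ _ E2) => /gi E; by rewrite -E1 -E2 E.
    + by move=> E; exfalso; exact: (dg' _ _ E).
    + by move=> E; exfalso; exact: (dg' _ _ E).
    + by move=> E; exfalso; exact: (dg' _ _ (esym E)).
    + move=> /di E; case: D1 => k1 E1; case: D2 => k2 E2; subst.
      rewrite !idxd in E; f_equal; mlia.
    + move=> /di E; mlia.
    + by move=> E; exfalso; exact: (dg' _ _ (esym E)).
    + move=> /di E; mlia.
    + move=> /di E; apply: (can_inj ee'); mlia.
  split.
    exists (fun x => cif (ImQ x) 0 (cif (Dd x) (2 * idx x + 2) 1)) => x.
    case: (Pcase x) => [[Q1 ->]|[[nQ1 [D1 ->]]|[nQ1 [nD1 ->]]]].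
    + rewrite cifT // cifF; last by move=> /ImQ_Dd /g_notD.
      rewrite cifF //; mlia.
    + rewrite cifF // cifT // cifF; last by apply: d_notQ => a; mlia.
      rewrite cifT; last by eexists.
      rewrite idxd; mlia.
    + rewrite cifF // cifF // cifF; last by apply: d_notQ => a; mlia.
      rewrite cifT; last by eexists.
      rewrite idxd; mlia.
  exists (fun n => d (4 * n)); split.
    by move=> n m /di E; mlia.
  move=> n x; case: (Pcase x) => [[Q1 ->]|[[nQ1 [D1 ->]]|[nQ1 [nD1 ->]]]].
  + exact: dg'.
  + move=> /di E; mlia.
  + move=> /di E; mlia.
- split; first exact: Qinj.
  split; first by exists idx => y; rewrite /Q idxd; exact: jgt.
  exists (fun n => d (2 * n + 1)); split.
    by move=> n m /di E; mlia.
  move=> n y /di E; have [a Ea] := jform y; mlia.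
- move=> x; rewrite /P cifT; last by exists x.
  by rewrite (HQi _ x erefl).
Qed.

Theorem mainTheorem3 (Omega : Type) (HOmega : countably_infinite Omega)
  (M : (Omega -> Omega) -> Prop)
  (HM : submonoid_Inj M) (HN : normal_Inj M) :
  (forall f, ~ (M f /\ Inj_infty f)) \/ (forall f, Inj_infty f -> M f).
Proof.
case: HOmega => e [e' ee' e'e].
case: (classic (exists f, M f /\ Inj_infty f)) => [[f [Mf If]]|Hn]; last first.
  by left => f H; apply: Hn; exists f.
right => g Ig.
have [u [pu Mu]] := step2 ee' e'e HM HN Mf If.
have [P [Q [pP [pQ EPQ]]]] := step3 ee' e'e Ig.
have MP := pure_M ee' e'e HN pu pP Mu.
have MQ := pure_M ee' e'e HN pu pQ Mu.
case: HM => _ [_ Mcomp].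
have -> : g = rcomp Q P by apply: functional_extensionality => x; rewrite /rcomp EPQ.
exact: Mcomp.
Qed.
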